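(* For any continuous probability measure $\mu$ on $\mathbb{R}^n$ and any $\alpha_1,\ldots,\alpha_4\in(0,1)$ with $\sum_{i=1}^4\alpha_i=1$, there exist two oriented hyperplanes $H_1,H_2$ such that $H_1^+\cap H_2^+$, $H_1^-\cap H_2^+$, $H_1^+\cap H_2^-$, $H_1^-\cap H_2^-$ have $\mu$-measure $\alpha_1,\alpha_2,\alpha_3,\alpha_4$, respectively.
   Context: A continuous probability measure on $\mathbb{R}^n$ is a Borel probability measure absolutely continuous with respect to Lebesgue measure. For an oriented hyperplane $H$, $H^+$ denotes the closed half-space in the direction of its normal and $H^-$ the closed half-space in the direction of the reverse normal. *)

(* Defs.v *)
(* R^n is modelled as [n.-tuple R], equipped with the
   library's product (Borel) sigma-algebra generated by the coordinate maps. *)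
From HB Require Import structures.
From mathcomp Require Import all_boot all_order all_algebra.
From mathcomp Require Import all_classical all_reals all_analysis.
Set Implicit Arguments. Unset Strict Implicit. Unset Printing Implicit Defensive.
Import Order.TTheory GRing.Theory Num.Theory.
Local Open Scope classical_set_scope.
Local Open Scope ring_scope.

Section Defs.
Variables (R : realType) (n : nat).

Definition box (a b : n.-tuple R) : set (n.-tuple R) :=
  [set x | forall i : 'I_n, tnth a i <= tnth x i <= tnth b i].

Definition box_vol (a b : n.-tuple R) : R := \prod_(i < n) (tnth b i - tnth a i).

Definition lebesgue_null (A : set (n.-tuple R)) : Prop :=
  forall eps : R, 0 < eps ->
    exists a b : nat -> n.-tuple R,
      (forall k (i : 'I_n), tnth (a k) i <= tnth (b k) i) /\
      A `<=` \bigcup_k box (a k) (b k) /\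
      (\sum_(0 <= k <oo) (box_vol (a k) (b k))%:E < eps%:E)%E.

Definition lebesgue_abs_continuous (mu : set (n.-tuple R) -> \bar R) : Prop :=
  forall A : set (n.-tuple R), measurable A -> lebesgue_null A -> mu A = 0%E.

Definition continuous_probability (mu : probability (n.-tuple R) R) : Prop :=
  lebesgue_abs_continuous mu.

Definition dotp (w x : n.-tuple R) : R := \sum_(i < n) tnth w i * tnth x i.

(* An oriented hyperplane H = {x | <w,x> = c} is given by a nonzero normal w
   and an offset c; H^+ is the closed half-space in the direction of w, H^-
   the closed half-space in the direction of -w. *)
Definition nonzero_vec (w : n.-tuple R) : Prop := exists i : 'I_n, tnth w i != 0.

Definition hplus (w : n.-tuple R) (c : R) : set (n.-tuple R) := [set x | c <= dotp w x].
Definition hminus (w : n.-tuple R) (c : R) : set (n.-tuple R) := [set x | dotp w x <= c].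

End Defs.

(* Main.v *)
Require Import Defs.
From HB Require Import structures.
From mathcomp Require Import all_boot all_order all_algebra.
From mathcomp Require Import all_classical all_reals all_analysis.
From mathcomp Require Import ring lra.
From mathcomp Require Import measurable_realfun lebesgue_integral.
Import Order.TTheory GRing.Theory Num.Theory.
Import numFieldNormedType.Exports.
Import Num.Def.
Set Implicit Arguments. Unset Strict Implicit. Unset Printing Implicit Defensive.
Local Open Scope classical_set_scope.
Local Open Scope ring_scope.

Lemma seq_to_cont (R : realType) (f : R -> R) s :
  (forall u : nat -> R, u k @[k --> \oo] --> s -> f (u k) @[k --> \oo] --> f s) ->
  f t @[t --> s] --> f s.
Proof.
move=> H; apply/cvgrPdist_lt => e e0.
apply/nbhs_normP.
apply: contrapT => hn.
have hu : forall k : nat, exists t, `|s - t| < harmonic k /\ e <= `|f s - f t|.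
  move=> k; apply: contrapT => hk; apply: hn; exists (harmonic k); first exact: harmonic_gt0.
  move=> t /= st; apply: contrapT => ft; apply: hk; exists t; split => //.
  by rewrite leNgt; apply/negP.
have [u hu'] := choice hu.
have us : u k @[k --> \oo] --> s.
  apply/cvgrPdist_lt => d d0; near=> k.
  apply: lt_trans (hu' k).1 _; near: k.
  have := @cvgr_lt _ _ _ _ (@harmonic R) 0 (@cvg_harmonic R) d d0; exact.
have := H u us => /cvgrPdist_lt /(_ e e0) [N _ HN].
have := HN N (leqnn N) => /=.
by rewrite ltNge (hu' N).2.
Unshelve. all: by end_near.
Qed.

Lemma ivt_gen (R : realType) (f : R -> R) (x1 x2 v : R) : continuous f ->
  f x1 <= v -> v <= f x2 -> exists c, f c = v.
Proof.
move=> fc h1 h2; have [le12|le21] := leP x1 x2.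
  have hv : minr (f x1) (f x2) <= v <= maxr (f x1) (f x2).
    by rewrite ge_min le_max h1 h2 orbT.
  by have [c _ fcv] := IVT le12 (continuous_subspaceT fc) hv; exists c.
have hv : minr (f x2) (f x1) <= v <= maxr (f x2) (f x1).
  by rewrite ge_min le_max h1 h2 !orbT.
by have [c _ fcv] := IVT (ltW le21) (continuous_subspaceT fc) hv; exists c.
Qed.

Lemma near_lt (R : realType) (f : R -> R) s v : f t @[t --> s] --> f s -> f s < v ->
  exists2 d, 0 < d & forall t, `|s - t| < d -> f t < v.
Proof.
move=> cf hv; have := @cvgr_lt _ _ _ _ f (f s) cf v hv.
case=> d /= d0 hd; exists d => // t st; apply: hd; exact: st.
Qed.

Lemma near_gt (R : realType) (f : R -> R) s v : f t @[t --> s] --> f s -> v < f s ->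
  exists2 d, 0 < d & forall t, `|s - t| < d -> v < f t.
Proof.
move=> cf hv; have := @cvgr_gt _ _ _ _ f (f s) cf v hv.
case=> d /= d0 hd; exists d => // t st; apply: hd; exact: st.
Qed.

Section Cvg.
Variables (R : realType) (n : nat) (mu : probability (n.-tuple R) R).

Lemma measurable_dotp (w : n.-tuple R) : measurable_fun setT (dotp w).
Proof.
rewrite /dotp; apply: measurable_sum => i.
apply: measurable_funM; first exact: measurable_cst.
exact: measurable_tnth.
Qed.

Lemma measurable_ge0 (g : n.-tuple R -> R) : measurable_fun setT g ->
  measurable [set x | 0 <= g x].
Proof.
move=> mg; have := mg measurableT `[0, +oo[%classic (measurable_itv _).
by rewrite setTI; congr measurable; apply/seteqP; split => x /=; rewrite in_itv /= andbT.
Qed.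

Lemma cvg_mu_sets (E : set (n.-tuple R)) (mE : measurable E)
  (g_ : nat -> n.-tuple R -> R) (g : n.-tuple R -> R) :
  (forall k, measurable_fun setT (g_ k)) -> measurable_fun setT g ->
  (forall x, (fun k => g_ k x) @ \oo --> g x) ->
  mu [set x | g x = 0] = 0%E ->
  (fun k => mu (E `&` [set x | 0 <= g_ k x])) @ \oo --> mu (E `&` [set x | 0 <= g x]).
Proof.
move=> mg_ mg cg g0.
have mS k : measurable (E `&` [set x | 0 <= g_ k x]).
  by apply: measurableI => //; exact: measurable_ge0.
have mS' : measurable (E `&` [set x | 0 <= g x]).
  by apply: measurableI => //; exact: measurable_ge0.
have mN : measurable [set x | g x = 0].
  have := mg measurableT [set 0] (measurable_set1 _).
  by rewrite setTI.
have mf k : measurable_fun setT (fun x => (\1_(E `&` [set x | 0 <= g_ k x]) x)%:E : \bar R).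
  by apply/measurable_EFinP; exact: measurable_indic.
have mf' : measurable_fun setT (fun x => (\1_(E `&` [set x | 0 <= g x]) x)%:E : \bar R).
  by apply/measurable_EFinP; exact: measurable_indic.
have := @dominated_convergence _ _ R mu setT measurableT
  (fun k x => (\1_(E `&` [set x | 0 <= g_ k x]) x)%:E)
  (fun x => (\1_(E `&` [set x | 0 <= g x]) x)%:E) (EFin \o cst 1) mf mf'.
case.
- exists [set x | g x = 0]; split => //.
  move=> x /=; apply: contra_notP => gx0 _.
  apply: cvg_near_cst.
  have [gp|gn] : 0 < g x \/ g x < 0.
    by have /eqP := gx0; rewrite neq_lt => /orP[h|h]; [right|left].
  + near=> k.
    have hk : 0 < g_ k x.
      near: k. have := @cvgr_gt _ _ _ _ (fun k => g_ k x) (g x) (cg x) 0 gp. exact.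
    rewrite !indicE; do 3 f_equal.
    apply/idP/idP; rewrite !inE /= => -[Ex _]; split => //; exact: ltW.
  + near=> k.
    have hk : g_ k x < 0.
      near: k. have := @cvgr_lt _ _ _ _ (fun k => g_ k x) (g x) (cg x) 0 gn. exact.
    rewrite !indicE; do 3 f_equal.
    apply/idP/idP; rewrite !inE /= => -[Ex h]; [by move: h; rewrite leNgt hk | by move: h; rewrite leNgt gn].
- exact: finite_measure_integrable_cst.
- apply: aeW => x k _ /=; rewrite indicE.
  by case: (x \in _); rewrite /= ?normr1 ?normr0 lee_fin.
- move=> _ _; rewrite integral_indic // setIT.
  by under eq_fun do rewrite integral_indic // setIT.
Unshelve. all: by end_near.
Qed.

End Cvg.

Section Null.
Variables (R : realType) (n : nat).

Lemma sum_finite_series (f : nat -> R) N : (forall k, (N <= k)%N -> f k = 0) ->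
  (forall k, 0 <= f k) ->
  (\sum_(0 <= k <oo) (f k)%:E = (\sum_(0 <= k < N) f k)%:E)%E.
Proof.
move=> f0 fge0; rewrite (nneseries_split _ N); last by move=> k _; rewrite lee_fin.
rewrite add0n eseries0 ?adde0 ?sumEFin //.
by move=> k Nk _; rewrite f0.
Qed.

Lemma prod_bound (i j : 'I_n) (f : 'I_n -> R) (u v D : R) : i != j -> 1 <= D ->
  0 <= f i <= u -> 0 <= f j <= v -> (forall l, l != i -> l != j -> 0 <= f l <= D) ->
  \prod_(l < n) f l <= u * v * D ^+ n.
Proof.
move=> ij D1 /andP[fi0 fiu] /andP[fj0 fjv] fl.
rewrite (bigD1 i) //= (bigD1 j) /=; last by rewrite eq_sym.
have P0 : 0 <= \prod_(l < n | (l != i) && (l != j)) f l.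
  by apply: prodr_ge0 => l /andP[li lj]; have /andP[] := fl l li lj.
have PD : \prod_(l < n | (l != i) && (l != j)) f l <= D ^+ n.
  apply: (@le_trans _ _ (\prod_(l < n | (l != i) && (l != j)) D)).
    by apply: ler_prod => l /andP[li lj]; exact: fl.
  rewrite big_mkcond /=.
  apply: (@le_trans _ _ (\prod_(l < n) D)); last first.
    by rewrite prodr_const card_ord.
  apply: ler_prod => l _; case: ifP => _; first by rewrite lexx andbT (le_trans ler01 D1).
  by rewrite ler01 D1.
rewrite -mulrA; apply: ler_pM => //; first exact: mulr_ge0.
by apply: ler_pM.
Qed.

Lemma minmax_affine (p q y1 y y2 : R) : y1 <= y <= y2 ->
  minr (p + q * y1) (p + q * y2) <= p + q * y <= maxr (p + q * y1) (p + q * y2).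
Proof.
move=> /andP[h1 h2]; have [q0|q0] := leP 0 q.
- have a1 : q * y1 <= q * y by rewrite ler_wpM2l.
  have a2 : q * y <= q * y2 by rewrite ler_wpM2l.
  by rewrite ge_min le_max !lerD2l a1 a2 ?orbT.
- have a1 : q * y <= q * y1 by rewrite ler_wnM2l // ltW.
  have a2 : q * y2 <= q * y by rewrite ler_wnM2l // ltW.
  by rewrite ge_min le_max !lerD2l a1 a2 !orbT.
Qed.

Lemma maxBmin (u v : R) : maxr u v - minr u v = `|u - v|.
Proof.
rewrite maxEle minEle; have [uv|uv] := leP u v.
  by rewrite distrC ger0_norm // subr_ge0.
by rewrite ger0_norm // subr_ge0 ltW.
Qed.

Lemma null_piece (i j : 'I_n) (al be c K : R) : i != j -> al != 0 -> 0 < K ->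
  lebesgue_null [set x : n.-tuple R |
    al * tnth x i + be * tnth x j = c /\ forall l, -K <= tnth x l <= K].
Proof.
move=> ij al0 K0 eps eps0.
pose M := `|be| / `|al|.
pose C := (2 * K + 1) ^+ n.
pose N := (truncn (M * (2 * K) ^+ 2 * C / eps)).+1.
have N0 : 0 < N%:R :> R by rewrite ltr0n.
pose h := 2 * K / N%:R.
have h0 : 0 < h by rewrite divr_gt0 // mulr_gt0.
pose y (r : nat) := - K + r%:R * h.
pose phi (v : R) := c / al + (- be / al) * v.
pose a r : n.-tuple R := if (r < N)%N then
  [tuple (if l == i then minr (phi (y r)) (phi (y r.+1))
          else if l == j then y r else - K) | l < n] else [tuple 0 | l < n].
pose b r : n.-tuple R := if (r < N)%N then
  [tuple (if l == i then maxr (phi (y r)) (phi (y r.+1))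
          else if l == j then y r.+1 else K) | l < n] else [tuple 0 | l < n].
exists a, b; split; [|split].
- move=> k l; rewrite /a /b; case: ifP => _; rewrite !tnth_mktuple //.
  case: ifP => _; first by rewrite ge_min !le_max lexx.
  case: ifP => _; first by rewrite /y lerD2l ler_pM2r // ler_nat.
  lra.
- move=> x [hx xK].
  have /andP[xj1 xj2] := xK j.
  have q0 : 0 <= (tnth x j + K) / h by apply: divr_ge0; [lra | exact: ltW].
  have /andP[t1 t2] := truncn_itv q0.
  set r0 := truncn _ in t1 t2.
  rewrite ler_pdivlMr // in t1; rewrite ltr_pdivrMr // in t2.
  have Nh : N%:R * h = 2 * K by rewrite /h mulrC divfK // gt_eqF.
  have hy : exists2 r, (r < N)%N & y r <= tnth x j <= y r.+1.
    have [hr|hr] := leqP r0 N.-1.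
    - exists r0; first by rewrite (leq_ltn_trans hr).
      rewrite /y; apply/andP; split; lra.
    - exists N.-1 => //; rewrite /y /=; apply/andP; split; last first.
        by rewrite -/N Nh; lra.
      have : N.-1%:R * h <= r0%:R * h by rewrite ler_pM2r // ler_nat ltnW.
      lra.
  case: hy => r rN hy.
  exists r => //; rewrite /box /a /b rN => l; rewrite !tnth_mktuple.
  case: ifP => [/eqP ->|_].
    have -> : tnth x i = phi (tnth x j).
      rewrite /phi -hx mulrDl mulrAC mulfV // mul1r; ring.
    exact: minmax_affine.
  by case: ifP => [/eqP ->|_] //.
- have ab k l : tnth (a k) l <= tnth (b k) l.
    rewrite /a /b; case: ifP => _; rewrite !tnth_mktuple //.
    case: ifP => _; first by rewrite ge_min !le_max lexx.
    case: ifP => _; first by rewrite /y lerD2l ler_pM2r // ler_nat.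
    lra.
  have n0 : (0 < n)%N by case: (i) => /= m; case: n => //.
  rewrite (@sum_finite_series (fun k => box_vol (a k) (b k)) N).
  + rewrite lte_fin.
    apply: (@le_lt_trans _ _ (\sum_(0 <= k < N) (M * h * h * C))).
      apply: ler_sum_nat => k /= kN.
      rewrite /box_vol /a /b kN.
      apply: (@prod_bound i j _ (M * h) h (2 * K + 1)) => //.
      * lra.
      * rewrite !tnth_mktuple eqxx maxBmin /phi /M.
        rewrite opprD addrACA subrr add0r -mulrBr normrM.
        have -> : y k - y k.+1 = - h by rewrite /y -addn1 natrD; ring.
        rewrite normrN (gtr0_norm h0) mulr_ge0 ?normr_ge0 ?(ltW h0) //=.
        by rewrite normrM normrN normfV.
      * rewrite !tnth_mktuple eq_sym (negPf ij) eqxx.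
        have -> : y k.+1 - y k = h by rewrite /y -addn1 natrD; ring.
        by rewrite ltW //=.
      * move=> l li lj; rewrite !tnth_mktuple (negPf li) (negPf lj); lra.
    rewrite sumr_const_nat subn0.
    have -> : M * h * h * C *+ N = M * (2 * K) ^+ 2 * C / N%:R.
      rewrite -mulr_natr /h; field; rewrite pnatr_eq0 //.
    have := truncnS_gt (M * (2 * K) ^+ 2 * C / eps).
    rewrite ltr_pdivrMr // => H.
    by rewrite ltr_pdivrMr // [eps * _]mulrC.
  + move=> k Nk; rewrite /box_vol /a /b ltnNge Nk /=.
    by rewrite (bigD1 (Ordinal n0)) //= !tnth_mktuple subrr mul0r.
  + by move=> k; rewrite /box_vol; apply: prodr_ge0 => l _; rewrite subr_ge0.
Qed.
End Null.

Section Main.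
Variables (R : realType) (n : nat) (mu : probability (n.-tuple R) R).
Variables (i0 i1 : 'I_n) (i01 : i0 != i1).
Hypothesis mu_ac : continuous_probability mu.

Let i10 : (i1 == i0) = false. Proof. by rewrite eq_sym (negPf i01). Qed.

Definition wt (t : R) : n.-tuple R :=
  [tuple (if l == i0 then 1 - 2 * t else if l == i1 then t * (1 - t) else 0) | l < n].

Lemma dotp_wt t x : dotp (wt t) x = (1 - 2 * t) * tnth x i0 + t * (1 - t) * tnth x i1.
Proof.
rewrite /dotp (bigD1 i0) //= (bigD1 i1) /=; last by rewrite eq_sym.
rewrite big1 ?addr0; last first.
  by move=> l /andP[li lj]; rewrite tnth_mktuple (negPf li) (negPf lj) mul0r.
by rewrite !tnth_mktuple eqxx i10 eqxx.
Qed.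

Lemma nonzero_wt t : nonzero_vec (wt t).
Proof.
have [h|h] := eqVneq (t * (1 - t)) 0.
  exists i0; rewrite tnth_mktuple eqxx.
  have : t = 0 \/ t = 1.
    move/eqP: h; rewrite mulf_eq0 subr_eq0 => /orP[/eqP->|/eqP<-]; by [left|right].
  by case=> ->; apply/eqP; lra.
by exists i1; rewrite tnth_mktuple i10 eqxx.
Qed.

Lemma mpre (g : n.-tuple R -> R) (Y : set R) : measurable_fun setT g ->
  measurable Y -> measurable [set x | Y (g x)].
Proof. by move=> mg mY; have := mg measurableT Y mY; rewrite setTI. Qed.

Lemma mu_hyper_gen (i j : 'I_n) (al be c : R) : i != j -> al != 0 ->
  mu [set x | al * tnth x i + be * tnth x j = c] = 0%E.
Proof.
move=> ij al0.
pose g x := al * tnth x i + be * tnth x j.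
have mg : measurable_fun setT g.
  apply: measurable_funD; apply: measurable_funM;
    by [exact: measurable_cst | exact: measurable_tnth].
pose s (x : n.-tuple R) : R := \sum_(l < n) `|tnth x l|.
have ms : measurable_fun setT s.
  apply: measurable_sum => l; apply: measurableT_comp => //.
  exact: measurable_tnth.
pose F (K : nat) := [set x | g x = c] `&` [set x | s x <= K%:R].
have mF K : measurable (F K).
  apply: measurableI; first by have := mpre mg (measurable_set1 c).
  have := mpre ms (measurable_itv `]-oo, K%:R]); congr measurable; apply/seteqP; split => x /=; rewrite in_itv /=.
have F0 K : mu (F K) = 0%E.
  apply: mu_ac => //; move=> eps eps0.
  have [a [b [ab [cov sm]]]] := @null_piece R n i j al be c (K.+1)%:R ij al0 (ltr0Sn R K) eps eps0.
  exists a, b; split => //; split => //.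
  move=> x [gx sx]; apply: cov; split => // l.
  have : `|tnth x l| <= K%:R.
    apply: le_trans sx; rewrite /s (bigD1 l) //= lerDl.
    by apply: sumr_ge0 => m _.
  rewrite ler_norml => /andP[h1 h2].
  rewrite -natr1; apply/andP; split; lra.
have mA : measurable [set x | g x = c] by by have := mpre mg (measurable_set1 c).
apply/eqP; rewrite eq_le measure_ge0 andbT.
apply: (le_trans (measure_sigma_subadditive _ mF mA _)).
  move=> x gx; exists (truncn (s x)).+1 => //; split => //.
  rewrite /= ltW //; exact: truncnS_gt.
by rewrite eseries0 // => k _ _; exact: F0.
Qed.

Lemma mu_hyper t c : mu [set x | dotp (wt t) x - c = 0] = 0%E.
Proof.
have [h|h] := eqVneq (1 - 2 * t) 0.
  have h2 : t * (1 - t) != 0.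
    have -> : t = 2^-1 by apply/eqP; rewrite -subr_eq0; apply/eqP; lra.
    by apply/eqP; lra.
  rewrite (_ : [set x | _] = [set x | t * (1 - t) * tnth x i1 + (1 - 2 * t) * tnth x i0 = c]).
    by apply: mu_hyper_gen => //; rewrite i10.
  by apply/seteqP; split => x /=; rewrite dotp_wt; lra.
rewrite (_ : [set x | _] = [set x | (1 - 2 * t) * tnth x i0 + t * (1 - t) * tnth x i1 = c]).
  exact: mu_hyper_gen.
by apply/seteqP; split => x /=; rewrite dotp_wt; lra.
Qed.

Lemma mu_fin (A : set (n.-tuple R)) : measurable A -> mu A = (fine (mu A))%:E.
Proof. by move=> mA; rewrite fineK // fin_num_measure. Qed.

Definition Af (E : set (n.-tuple R)) (t c : R) : R :=
  fine (mu (E `&` [set x | 0 <= dotp (wt t) x - c])).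

Lemma measurable_dotpB t c : measurable_fun setT (fun x => dotp (wt t) x - c).
Proof. by apply: measurable_funB; [exact: measurable_dotp | exact: measurable_cst]. Qed.

Lemma cvg_Af E (mE : measurable E) (u v : nat -> R) s c :
  u k @[k --> \oo] --> s -> v k @[k --> \oo] --> c ->
  Af E (u k) (v k) @[k --> \oo] --> Af E s c.
Proof.
move=> us vc.
have cg x : dotp (wt (u k)) x - v k @[k --> \oo] --> dotp (wt s) x - c.
  rewrite dotp_wt; under eq_fun do rewrite dotp_wt.
  have h1 : (fun k => 1 - 2 * u k) @ \oo --> 1 - 2 * s.
    exact: (cvgB (cvg_cst _) (cvgM (cvg_cst _) us)).
  have h2 : (fun k => u k * (1 - u k)) @ \oo --> s * (1 - s).
    exact: (cvgM us (cvgB (cvg_cst _) us)).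
  have h3 : (fun k => (1 - 2 * u k) * tnth x i0) @ \oo --> (1 - 2 * s) * tnth x i0.
    exact: (cvgM h1 (cvg_cst _)).
  have h4 : (fun k => u k * (1 - u k) * tnth x i1) @ \oo --> s * (1 - s) * tnth x i1.
    exact: (cvgM h2 (cvg_cst _)).
  exact: (cvgB (cvgD h3 h4) vc).
have := @cvg_mu_sets R n mu E mE (fun k x => dotp (wt (u k)) x - v k)
  (fun x => dotp (wt s) x - c) (fun k => measurable_dotpB _ _) (measurable_dotpB _ _)
  cg (mu_hyper s c).
rewrite mu_fin; last by apply: measurableI => //; exact: measurable_ge0 (measurable_dotpB _ _).
by move/fine_cvg.
Qed.

Lemma cvg_Af_t E (mE : measurable E) s c : Af E t c @[t --> s] --> Af E s c.
Proof. by apply: seq_to_cont => u us; exact: (cvg_Af mE us (cvg_cst c)). Qed.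

Lemma cvg_Af_c E (mE : measurable E) s c : Af E s c' @[c' --> c] --> Af E s c.
Proof. by apply: seq_to_cont => u uc; exact: (cvg_Af mE (cvg_cst s) uc). Qed.

Lemma tail_gen E (mE : measurable E) t (sg : R) : sg != 0 ->
  Af E t (- sg * k.+1%:R) @[k --> \oo] --> fine (mu (E `&` [set x | 0 <= sg])).
Proof.
move=> sg0.
have cg x : dotp (wt t) x * harmonic k + sg @[k --> \oo] --> sg.
  rewrite -[X in _ --> X]add0r; apply: cvgD; last exact: cvg_cst.
  rewrite -(mulr0 (dotp (wt t) x)); apply: cvgM; first exact: cvg_cst.
  exact: cvg_harmonic.
have mg k : measurable_fun setT (fun x => dotp (wt t) x * harmonic k + sg).
  apply: measurable_funD; last exact: measurable_cst.
  by apply: measurable_funM; [exact: measurable_dotp | exact: measurable_cst].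
have := @cvg_mu_sets R n mu E mE (fun k x => dotp (wt t) x * harmonic k + sg)
  (fun x => sg) mg (measurable_cst _) cg.
rewrite (_ : [set x | sg = 0] = set0); last first.
  by apply/seteqP; split => x //= /eqP; rewrite (negPf sg0).
move=> /(_ (measure0 _)).
rewrite mu_fin; last by apply: measurableI => //; exact: measurable_ge0 (measurable_cst _).
move/fine_cvg; apply: cvg_trans; apply: near_eq_cvg; apply: nearW => k /=.
rewrite /Af; congr (fine (mu (E `&` _))); apply/seteqP.
have kp : 0 < k.+1%:R :> R by rewrite ltr0Sn.
have e x : dotp (wt t) x - - sg * k.+1%:R = (dotp (wt t) x * harmonic k + sg) * k.+1%:R.
  by rewrite /harmonic /=; field; rewrite -natr1 addrC in kp; exact: lt0r_neq0.
by split => x /=; rewrite e pmulr_lge0.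
Qed.

Lemma Af_lo E (mE : measurable E) t v : v < fine (mu E) -> exists c, v < Af E t c.
Proof.
move=> vE; have := tail_gen mE t (oner_neq0 R).
rewrite (_ : [set x | 0 <= 1] = setT); last by apply/seteqP; split => x //= _; exact: ler01.
rewrite setIT => h.
have [N _ HN] := @cvgr_gt _ _ _ _ _ _ h v vE.
by exists (- 1 * N.+1%:R); exact: (HN N (leqnn N)).
Qed.

Lemma Af_hi E (mE : measurable E) t v : 0 < v -> exists c, Af E t c < v.
Proof.
move=> v0; have m10 : -1 != 0 :> R by rewrite oppr_eq0 oner_neq0.
have := tail_gen mE t m10.
rewrite (_ : [set x | 0 <= - 1] = set0); last first.
  by apply/seteqP; split => x //=; rewrite oppr_ge0 ler10.
rewrite setI0 measure0 /= => h.
have [N _ HN] := @cvgr_lt _ _ _ _ _ _ h v v0.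
by exists (- - 1 * N.+1%:R); exact: (HN N (leqnn N)).
Qed.

Lemma measurable_half E (mE : measurable E) t c :
  measurable (E `&` [set x | 0 <= dotp (wt t) x - c]).
Proof. by apply: measurableI => //; exact: measurable_ge0 (measurable_dotpB _ _). Qed.

Lemma Af_mono E (mE : measurable E) t c c' : c <= c' -> Af E t c' <= Af E t c.
Proof.
move=> cc; rewrite /Af; apply: fine_le.
- exact: fin_num_measure (measurable_half _ _ _).
- exact: fin_num_measure (measurable_half _ _ _).
- apply: (@le_measure _ _ _ mu); rewrite ?inE; try exact: measurable_half.
  by move=> x [Ex h]; split => //; rewrite /= in h *; lra.
Qed.

Lemma Af_ge0 E (mE : measurable E) t c : 0 <= Af E t c.
Proof. by rewrite /Af fine_ge0 // measure_ge0. Qed.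

Lemma Af_split E (mE : measurable E) t c :
  fine (mu (E `&` [set x | 0 <= dotp (wt t) x - c])) +
  fine (mu (E `&` [set x | dotp (wt t) x - c <= 0])) = fine (mu E).
Proof.
set A := E `&` _; set B := E `&` _.
have mB : measurable B.
  apply: measurableI => //.
  have := mpre (measurable_dotpB t c) (measurable_itv `]-oo, 0]).
  by congr measurable; apply/seteqP; split => x /=; rewrite in_itv.
have mA : measurable A := measurable_half mE t c.
have Afin : (mu A < +oo)%E by rewrite ltey_eq fin_num_measure.
have := measureUfinl mA mB Afin.
have -> : A `|` B = E.
  apply/seteqP; split => [x [[Ex _]|[Ex _]] //|x Ex].
  by have [h|h] := leP 0 (dotp (wt t) x - c); [left|right; split => //; exact: ltW].
rewrite [X in (_ = _ - X)%E](_ : _ = 0%E); last first.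
  apply: (@subset_measure0 _ _ _ mu _ _ (measurableI _ _ mA mB)
    (mpre (measurable_dotpB t c) (measurable_set1 0)) _ (mu_hyper t c)).
  by move=> x [[_ h1] [_ h2]] /=; apply/eqP; rewrite eq_le h1 h2.
rewrite sube0 => ->.
by rewrite fineD // fin_num_measure.
Qed.

Lemma core L Rg (mL : measurable L) (mRg : measurable Rg) (a1 a2 : R) :
  0 < a1 -> a1 < fine (mu L) ->
  (forall c, Af L 0 c < a1 -> Af Rg 0 c <= a2) ->
  (exists c, Af L 1 c < a1 /\ a2 < Af Rg 1 c) ->
  exists s c, Af L s c = a1 /\ Af Rg s c = a2.
Proof.
move=> a10 a1L P0 [cb [hb1 hb2]].
pose P t := forall c, Af L t c < a1 -> Af Rg t c <= a2.
pose Q t := forall c, a1 < Af L t c -> a2 <= Af Rg t c.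
have cover t : P t \/ Q t.
  apply: contrapT => /not_orP [nP nQ].
  have [c1 [h1 h2]] : exists c, Af L t c < a1 /\ a2 < Af Rg t c.
    apply: contrapT => hn; apply: nP => c hc; rewrite leNgt; apply/negP => hc2.
    by apply: hn; exists c.
  have [c2 [h3 h4]] : exists c, a1 < Af L t c /\ Af Rg t c < a2.
    apply: contrapT => hn; apply: nQ => c hc; rewrite leNgt; apply/negP => hc2.
    by apply: hn; exists c.
  have [c12|c21] := leP c1 c2.
    by have := Af_mono mL t c12; lra.
  by have := Af_mono mRg t (ltW c21); lra.
pose S := [set t : R | 0 <= t <= 1 /\ P t].
have S0 : S 0 by split => //; rewrite lexx ler01.
have ubS : ubound S 1 by move=> t [/andP[_ ?] _].
have hS : has_sup S by split; [exists 0 | exists 1].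
pose s := sup S.
have s0 : 0 <= s := sup_upper_bound hS S0.
have s1 : s <= 1 := ge_sup (ex_intro _ 0 S0) ubS.
have Ps : P s.
  move=> c hA; rewrite leNgt; apply/negP => hB.
  have [d1 d10 H1] := near_lt (@cvg_Af_t L mL s c) hA.
  have [d2 d20 H2] := near_gt (@cvg_Af_t Rg mRg s c) hB.
  have dm : 0 < minr d1 d2 by rewrite lt_min d10 d20.
  have [t [t01 Pt] st] := sup_adherent dm hS.
  rewrite -/s in st.
  have ts : t <= s := sup_upper_bound hS (conj t01 Pt).
  have hts : `|s - t| < minr d1 d2 by rewrite ger0_norm ?subr_ge0 //; lra.
  move: hts; rewrite lt_min => /andP[hd1 hd2].
  have := Pt c (H1 t hd1); have := H2 t hd2; lra.
have Qs : s < 1 -> Q s.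
  move=> s1' c hA; rewrite leNgt; apply/negP => hB.
  have [d1 d10 H1] := near_gt (@cvg_Af_t L mL s c) hA.
  have [d2 d20 H2] := near_lt (@cvg_Af_t Rg mRg s c) hB.
  pose d := minr (minr d1 d2) (1 - s).
  have d0 : 0 < d by rewrite /d !lt_min d10 d20 subr_gt0 s1'.
  have dd1 : d <= d1 by rewrite /d !ge_min lexx.
  have dd2 : d <= d2 by rewrite /d !ge_min lexx orbT.
  have dd3 : d <= 1 - s by rewrite /d !ge_min lexx orbT.
  pose t := s + d / 2.
  have ht : `|s - t| < d by rewrite /t opprD addrA subrr add0r normrN ger0_norm; lra.
  have nSt : ~ S t.
    move=> St; have := sup_upper_bound hS St; rewrite -/s /t; lra.
  have Qt : Q t.
    case: (cover t) => // Pt; exfalso; apply: nSt; split => //.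
    apply/andP; split; rewrite /t; lra.
  have := Qt c (H1 t (lt_le_trans ht dd1)).
  have := H2 t (lt_le_trans ht dd2); lra.
have s_lt1 : s < 1.
  rewrite lt_neqAle s1 andbT; apply/eqP => s1e.
  have P1 : P 1 by rewrite -s1e.
  by have := P1 cb hb1; lra.
have Qs' := Qs s_lt1.
have [clo hlo] := Af_lo mL s a1L.
have [chi hhi] := Af_hi mL s a10.
pose K c := (Af L s c - a1) + (Af Rg s c - a2).
have Kc : continuous K.
  move=> c.
  have hL : (fun c => Af L s c - a1) @ c --> Af L s c - a1.
    exact: (cvgB (@cvg_Af_c L mL s c) (cvg_cst _)).
  have hR : (fun c => Af Rg s c - a2) @ c --> Af Rg s c - a2.
    exact: (cvgB (@cvg_Af_c Rg mRg s c) (cvg_cst _)).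
  exact: (cvgD hL hR).
have Kchi : K chi <= 0 by have := Ps chi hhi; rewrite /K; lra.
have Kclo : 0 <= K clo by have := Qs' clo hlo; rewrite /K; lra.
have [c Kc0] := ivt_gen Kc Kchi Kclo.
exists s, c; move: Kc0; rewrite /K.
have [hl|hl|hl] := ltgtP (Af L s c) a1.
- by have := Ps c hl; lra.
- by have := Qs' c hl; lra.
- lra.
Qed.

Lemma dotp_w01 x : dotp (wt 1) x = - dotp (wt 0) x.
Proof. by rewrite !dotp_wt; ring. Qed.

Lemma main_sec (a1 a2 a3 a4 : R) :
  0 < a1 -> 0 < a2 -> 0 < a3 -> 0 < a4 ->
  a1 + a2 + a3 + a4 = 1 ->
  exists (w1 w2 : n.-tuple R) (c1 c2 : R),
    nonzero_vec w1 /\ nonzero_vec w2 /\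
    mu (hplus w1 c1 `&` hplus w2 c2) = a1%:E /\
    mu (hminus w1 c1 `&` hplus w2 c2) = a2%:E /\
    mu (hplus w1 c1 `&` hminus w2 c2) = a3%:E /\
    mu (hminus w1 c1 `&` hminus w2 c2) = a4%:E.
Proof.
move=> a1p a2p a3p a4p hsum.
have mT : measurable [set: n.-tuple R] by [].
have muT : fine (mu setT) = 1 by rewrite probability_setT.
pose p := a1 + a3.
have [clo hlo] : exists c, p < Af setT 0 c.
  by apply: Af_lo => //; rewrite muT /p; lra.
have [chi hhi] : exists c, Af setT 0 c < p.
  by apply: Af_hi => //; rewrite /p; lra.
have [c1 hc1] := ivt_gen (fun c => @cvg_Af_c setT mT 0 c) (ltW hhi) (ltW hlo).
rewrite /= in hc1.
have mle t c : measurable [set x | dotp (wt t) x - c <= 0].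
  have := mpre (measurable_dotpB t c) (measurable_itv `]-oo, 0]).
  by congr measurable; apply/seteqP; split => x /=; rewrite in_itv.
pose L := [set x | 0 <= dotp (wt 0) x - c1].
pose Rg := [set x | dotp (wt 0) x - c1 <= 0].
have mL : measurable L := measurable_ge0 (measurable_dotpB 0 c1).
have mRg : measurable Rg := mle 0 c1.
have muL : fine (mu L) = p by rewrite -hc1 /Af setTI.
have muRg : fine (mu Rg) = a2 + a4.
  have := Af_split mT 0 c1; rewrite !setTI muT => h.
  have h' : fine (mu L) + fine (mu Rg) = 1 := h.
  rewrite /p in muL; lra.
have P0 : forall c, Af L 0 c < a1 -> Af Rg 0 c <= a2.
  move=> c hc; have [cc1|c1c] := leP c c1.
    exfalso; move: hc; rewrite /Af (_ : L `&` _ = L); last first.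
      by apply/seteqP; split => [x [] //|x /= Lx]; split => //=; move: Lx; rewrite /L /=; lra.
    by rewrite muL /p; lra.
  rewrite /Af (_ : Rg `&` _ = set0); last first.
    by apply/seteqP; split => [x [h1 h2]|x //]; move: h1 h2; rewrite /Rg /=; lra.
  by rewrite measure0 /=; exact: ltW.
have notP1 : exists c, Af L 1 c < a1 /\ a2 < Af Rg 1 c.
  exists (- c1); split.
    rewrite /Af (@subset_measure0 _ _ _ mu _ [set x | dotp (wt 0) x - c1 = 0]) //=.
    - by apply: measurableI => //; exact: measurable_ge0 (measurable_dotpB _ _).
    - exact: (mpre (measurable_dotpB 0 c1) (measurable_set1 0)).
    - move=> x [/= h1]; rewrite dotp_w01 => h2.
      by apply/eqP; rewrite eq_le h1 /=; lra.
    - exact: mu_hyper.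
  rewrite /Af (_ : Rg `&` _ = Rg); first by rewrite muRg; lra.
  by apply/seteqP; split => [x [] //|x /= Rx]; split => //=; move: Rx; rewrite /Rg /= dotp_w01; lra.
have a1L : a1 < fine (mu L) by rewrite muL /p; lra.
have [s [c [hA hB]]] := core mL mRg a1p a1L P0 notP1.
have hpE t c' : hplus (wt t) c' = [set x | 0 <= dotp (wt t) x - c'].
  by apply/seteqP; split => x /=; rewrite subr_ge0.
have hmE t c' : hminus (wt t) c' = [set x | dotp (wt t) x - c' <= 0].
  by apply/seteqP; split => x /=; rewrite subr_le0.
exists (wt 0), (wt s), c1, c.
rewrite !hpE !hmE -/L -/Rg.
split; first exact: nonzero_wt.
split; first exact: nonzero_wt.
have sL := Af_split mL s c; have sR := Af_split mRg s c.
have sL' : Af L s c + fine (mu (L `&` [set x | dotp (wt s) x - c <= 0])) = fine (mu L) := sL.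
have sR' : Af Rg s c + fine (mu (Rg `&` [set x | dotp (wt s) x - c <= 0])) = fine (mu Rg) := sR.
rewrite hA muL in sL'; rewrite hB muRg in sR'.
split; first by rewrite mu_fin; [congr EFin; exact: hA | exact: measurable_half].
split; first by rewrite mu_fin; [congr EFin; exact: hB | exact: measurable_half].
split; first by rewrite mu_fin; [congr EFin; rewrite /p in sL'; lra | exact: measurableI].
by rewrite mu_fin; [congr EFin; lra | exact: measurableI].
Qed.
End Main.

Theorem mainTheorem7 (R : realType) (n : nat)
    (mu : probability (n.-tuple R) R) (a1 a2 a3 a4 : R) :
  (2 <= n)%N ->
  continuous_probability mu ->
  0 < a1 < 1 -> 0 < a2 < 1 -> 0 < a3 < 1 -> 0 < a4 < 1 ->
  a1 + a2 + a3 + a4 = 1 ->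
  exists (w1 w2 : n.-tuple R) (c1 c2 : R),
    nonzero_vec w1 /\ nonzero_vec w2 /\
    mu (hplus w1 c1 `&` hplus w2 c2) = a1%:E /\
    mu (hminus w1 c1 `&` hplus w2 c2) = a2%:E /\
    mu (hplus w1 c1 `&` hminus w2 c2) = a3%:E /\
    mu (hminus w1 c1 `&` hminus w2 c2) = a4%:E.
Proof.
move=> n2 mac /andP[a1p _] /andP[a2p _] /andP[a3p _] /andP[a4p _] hsum.
have n0 : (0 < n)%N by apply: leq_trans n2.
have i01 : (Ordinal n0 : 'I_n) != Ordinal n2 by [].
exact: (main_sec i01 mac a1p a2p a3p a4p hsum).
Qed.
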